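(* Let $k\ge 4$ be an integer and let $T=[a,a+h]\times[b,b+h]\subset\mathbb R^2$ be a square of side $h>0$ with lower-left vertex $\mathbf x_1=(a,b)$. Let $$V_T=\{v\in Q_k(T):\ \partial_{\mathbf n}v|_e\in Q_{k-1}(e)\ \text{for each of the four edges } e \text{ of } T\}.$$ Consider the following linear functionals on $V_T$: (i) $v\mapsto v(\mathbf x_1+\tfrac{h}{k-2}(i,j))$ for $i,j=0,\dots,k-2$; (ii) $v\mapsto \partial_x v(\mathbf x_1+h(i,\tfrac{j}{k-3}))$ for $i=0,1$, $j=0,\dots,k-3$; (iii) $v\mapsto \partial_y v(\mathbf x_1+h(\tfrac{i}{k-3},j))$ for $i=0,\dots,k-3$, $j=0,1$; (iv) $v\mapsto \partial_{xy} v(\mathbf x_1+h(i,j))$ for $i,j=0,1$. Then this set of degrees of freedom uniquely determines a function of $V_T$: for any prescribed values of these functionals there exists exactly one $v\in V_T$ attaining them.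
   Context: $Q_k$ denotes the space of polynomials of degree at most $k$ in each variable separately, i.e. $Q_k=\mathrm{span}\{x_1^{k_1}\cdots x_d^{k_d}:0\le k_i\le k\}$ in dimension $d$; on an edge $e$ (a segment) $Q_{k-1}(e)$ means polynomials of degree at most $k-1$ in the variable along the edge. $\partial_{\mathbf n}$ denotes the derivative in the direction normal to the edge $e$ (i.e. $\partial_y$ on horizontal edges, $\partial_x$ on vertical edges), and the condition means that its restriction to $e$ is a polynomial of degree at most $k-1$ along $e$. *)

(* Defs.v *)
From mathcomp Require Import all_boot all_order all_algebra.
From mathcomp Require Export reals.
Set Implicit Arguments. Unset Strict Implicit. Unset Printing Implicit Defensive.
Import Order.TTheory GRing.Theory Num.Theory.
Local Open Scope ring_scope.

(* Bivariate polynomials in (x, y): an element p : {poly {poly R}} is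
   p = \sum_j p`_j(x) y^j, i.e. the outer variable is y and the
   coefficients are polynomials in x. *)
Notation poly2 R := {poly {poly R}}.

Definition eval2 (R : comNzRingType) (p : poly2 R) (x y : R) : R :=
  (p.[y%:P]).[x].

Definition dx (R : nzRingType) (p : poly2 R) : poly2 R :=
  map_poly (fun q : {poly R} => q^`()) p.
Definition dy (R : nzRingType) (p : poly2 R) : poly2 R := p^`().

Definition inQ (R : nzRingType) (k : nat) (p : poly2 R) : Prop :=
  (size p <= k.+1)%N /\ forall j, (size (nth 0%R p j) <= k.+1)%N.

Definition restr_h (R : comNzRingType) (p : poly2 R) (c : R) : {poly R} :=
  p.[c%:P].
Definition restr_v (R : comNzRingType) (p : poly2 R) (c : R) : {poly R} :=
  map_poly (fun q : {poly R} => q.[c]) p.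

Definition inVT (R : comNzRingType) (k : nat) (a b h : R) (p : poly2 R) : Prop :=
  [/\ inQ k p,
      (size (restr_h (dy p) b) <= k)%N,
      (size (restr_h (dy p) (b + h)) <= k)%N,
      (size (restr_v (dx p) a) <= k)%N &
      (size (restr_v (dx p) (a + h)) <= k)%N].

(* Main.v *)
From HB Require Import structures.
Require Import Defs.
From mathcomp Require Import all_boot all_order all_algebra.
From mathcomp Require Import reals.
From mathcomp Require Import zify ring.
Import Order.TTheory GRing.Theory Num.Theory.
Local Open Scope ring_scope.
Set Implicit Arguments. Unset Strict Implicit.

Section Uni.
Variable R : fieldType.

Lemma dbl_root (p : {poly R}) a : root p a -> root p^`() a ->
  (('X - a%:P) ^+ 2 %| p)%R.
Proof.
move=> /factor_theorem [q ->]; rewrite derivM derivXsubC mulr1 rootE !hornerE.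
rewrite subrr mulr0 add0r => /eqP qa.
have /factor_theorem [r ->] : root q a by rewrite rootE qa.
by rewrite -mulrA -expr2 dvdp_mull.
Qed.

Lemma L1 (p : {poly R}) a c (s : seq R) :
  (size p <= (size s + 4))%N -> a != c ->
  root p a -> root p^`() a -> root p c -> root p^`() c ->
  uniq s -> a \notin s -> c \notin s -> all (root p) s -> p = 0.
Proof.
move=> sp ac ra ra' rc rc' us as_ cs rs.
have cop : coprimep (('X - a%:P) ^+ 2) (('X - c%:P) ^+ 2).
  by rewrite coprimep_expl // coprimep_expr // coprimep_XsubC root_XsubC eq_sym.
have : (('X - a%:P) ^+ 2 * ('X - c%:P) ^+ 2 %| p)%R.
  by rewrite Gauss_dvdp // !dbl_root.
case/dvdpP => q pE.
apply/eqP; apply: contraTT sp => p0; rewrite -ltnNge.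
have q0 : q != 0 by apply: contraNneq p0 => q0; rewrite pE q0 mul0r.
have rq : all (root q) s.
  apply/allP => x xs; move/allP: rs => /(_ x xs); rewrite pE rootM => /orP [] // .
  rewrite rootM !rootE !hornerE !expf_eq0 /= !subr_eq0 => /orP [] /eqP ex.
    by rewrite -ex xs in as_.
  by rewrite -ex xs in cs.
have /(_ us) sq := max_poly_roots q0 rq.
rewrite pE size_mul // ?mulf_neq0 ?expf_neq0 ?polyXsubC_eq0 //.
rewrite size_mul ?expf_neq0 ?polyXsubC_eq0 // !size_exp_XsubC.
move: sq; case: (size q) => // n; rewrite ltnS => sq.
rewrite addSn /= -[(2+3)%N]/(1+4)%N addnA addn1 ltn_add2r ltnS; exact: sq.
Qed.
End Uni.

Section Grid.
Variable R : numFieldType.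

Lemma grid_end (a0 h : R) (N : nat) : (0 < N)%N -> a0 + h / N%:R * N%:R = a0 + h.
Proof. by move=> N0; rewrite divfK // pnatr_eq0 -lt0n. Qed.

Lemma grid_L1 (q : {poly R}) (a0 h : R) (N : nat) : 0 < h -> (0 < N)%N ->
  (size q <= N + 3)%N -> root q a0 -> root q^`() a0 ->
  root q (a0 + h) -> root q^`() (a0 + h) ->
  (forall i, (0 < i < N)%N -> root q (a0 + h / N%:R * i%:R)) -> q = 0.
Proof.
move=> h0 N0 sq ra ra' rc rc' ri.
have d0 : h / N%:R != 0 by rewrite mulf_neq0 ?invr_eq0 ?pnatr_eq0 -?lt0n // gt_eqF.
pose pt (i : nat) := a0 + h / N%:R * i%:R.
have ptinj : injective pt.
  move=> i j; rewrite /pt => /addrI /(mulfI d0) /eqP; rewrite eqr_nat => /eqP //.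
have ptN : pt N = a0 + h by rewrite /pt grid_end.
have pt0 : pt 0%N = a0 by rewrite /pt mulr0 addr0.
pose s := map pt (iota 1 N.-1).
have ss : size s = N.-1 by rewrite size_map size_iota.
apply: (@L1 _ q a0 (a0 + h) s).
- rewrite ss; apply: leq_trans sq _; move: N0; clear; lia.
- by rewrite -subr_eq0 opprD addrA subrr add0r oppr_eq0 gt_eqF.
- done. - done. - done. - done.
- by rewrite map_inj_uniq // iota_uniq.
- rewrite -pt0 mem_map // mem_iota //.
- rewrite -ptN mem_map // mem_iota; move: N0; clear; lia.
- apply/allP => x /mapP [i]; rewrite mem_iota => /andP [i1 iN] ->.
  apply: ri; rewrite i1 /=; move: N0 iN; clear; lia.
Qed.
End Grid.
Section Bi.
Variable R : comNzRingType.
Implicit Types p : poly2 R.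

Lemma size_mapP (S : nzSemiRingType) (f : {poly R} -> S) p : (size (map_poly f p) <= size p)%N.
Proof. exact: size_poly. Qed.

Lemma coef_dx p j : (dx p)`_j = (p`_j)^`().
Proof. by rewrite /dx coef_map_id0 // deriv0. Qed.

Lemma coef_dy p j : (dy p)`_j = p`_j.+1 *+ j.+1.
Proof. by rewrite /dy coef_deriv. Qed.

Lemma coef_rv p c j : (restr_v p c)`_j = (p`_j).[c].
Proof. by rewrite /restr_v coef_map_id0 // horner0. Qed.

Lemma rh_sum p c n : (size p <= n)%N ->
  restr_h p c = \sum_(j < n) c ^+ j *: p`_j.
Proof.
move=> sp; rewrite /restr_h (horner_coef_wide _ sp).
by apply: eq_bigr => j _; rewrite -rmorphXn mulrC mul_polyC.
Qed.

Lemma coef_rh p c n m : (size p <= n)%N ->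
  (restr_h p c)`_m = \sum_(j < n) c ^+ j * (p`_j)`_m.
Proof. by move=> sp; rewrite (rh_sum c sp) coef_sum; apply: eq_bigr => j _; rewrite coefZ. Qed.

Lemma rh_dx p c : restr_h (dx p) c = (restr_h p c)^`().
Proof.
rewrite (rh_sum c (size_mapP _ p)) (rh_sum c (leqnn (size p))).
rewrite raddf_sum; apply: eq_bigr => j _ /=. by rewrite coef_dx -!mul_polyC derivM derivC mul0r add0r.
Qed.

Lemma rv_dy p c : restr_v (dy p) c = (restr_v p c)^`().
Proof.
by apply/polyP => j; rewrite coef_rv coef_dy coef_deriv coef_rv hornerMn.
Qed.

Lemma dxdy p : dx (dy p) = dy (dx p).
Proof.
by apply/polyP => j; rewrite coef_dx !coef_dy coef_dx derivMn.
Qed.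

Lemma eval2_rh p x y : eval2 p x y = (restr_h p y).[x].
Proof. by []. Qed.

Lemma eval2_rv p x y : eval2 p x y = (restr_v p x).[y].
Proof.
rewrite eval2_rh (rh_sum y (leqnn (size p))) (horner_coef_wide _ (size_mapP _ p)).
rewrite horner_sum; apply: eq_bigr => j _.
by rewrite hornerZ coef_rv mulrC.
Qed.

End Bi.

Section Core.
Variable R : numFieldType.
Variables (N : nat) (a b h : R) (p : poly2 R).
Hypothesis N0 : (0 < N)%N.
Hypothesis h0 : 0 < h.
Let d := h / (N.+1)%:R.
Let e := h / N%:R.
Hypothesis Q : inQ (N + 3) p.
Hypothesis C1 : (size (restr_h (dy p) b) <= N + 3)%N.
Hypothesis C2 : (size (restr_h (dy p) (b + h)) <= N + 3)%N.
Hypothesis C3 : (size (restr_v (dx p) a) <= N + 3)%N.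
Hypothesis C4 : (size (restr_v (dx p) (a + h)) <= N + 3)%N.
Hypothesis H1 : forall i j, (i <= N.+1)%N -> (j <= N.+1)%N ->
  eval2 p (a + d * i%:R) (b + d * j%:R) = 0.
Hypothesis H2 : forall xe, xe = a \/ xe = a + h -> forall j, (j <= N)%N ->
  eval2 (dx p) xe (b + e * j%:R) = 0.
Hypothesis H3 : forall ye, ye = b \/ ye = b + h -> forall i, (i <= N)%N ->
  eval2 (dy p) (a + e * i%:R) ye = 0.
Hypothesis H4 : forall xe ye, xe = a \/ xe = a + h -> ye = b \/ ye = b + h ->
  eval2 (dx (dy p)) xe ye = 0.

Let sp : (size p <= N + 4)%N.
Proof. by case: Q => s _; apply: leq_trans s _; lia. Qed.

Lemma H1x xe : xe = a \/ xe = a + h -> forall j, (j <= N.+1)%N ->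
  eval2 p xe (b + d * j%:R) = 0.
Proof.
case=> -> j jN.
  by have := H1 (leq0n _) jN; rewrite mulr0 addr0.
by have := H1 (leqnn _) jN; rewrite /d grid_end.
Qed.

Lemma H1y ye : ye = b \/ ye = b + h -> forall i, (i <= N.+1)%N ->
  eval2 p (a + d * i%:R) ye = 0.
Proof.
case=> -> i iN.
  by have := H1 iN (leq0n _); rewrite mulr0 addr0.
by have := H1 iN (leqnn _); rewrite /d grid_end.
Qed.

Lemma H2e xe ye : xe = a \/ xe = a + h -> ye = b \/ ye = b + h ->
  eval2 (dx p) xe ye = 0.
Proof.
move=> hx; case=> ->.
  by have := H2 hx (leq0n N); rewrite mulr0 addr0.
by have := H2 hx (leqnn N); rewrite /e grid_end.
Qed.

Lemma H3e xe ye : xe = a \/ xe = a + h -> ye = b \/ ye = b + h ->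
  eval2 (dy p) xe ye = 0.
Proof.
move=> hx hy; case: hx => ->.
  by have := H3 hy (leq0n N); rewrite mulr0 addr0.
by have := H3 hy (leqnn N); rewrite /e grid_end.
Qed.

Lemma S1b xe : xe = a \/ xe = a + h -> restr_v p xe = 0.
Proof.
move=> hx; apply: (@grid_L1 _ _ b h N.+1) => //.
- by apply: leq_trans (size_mapP _ _) _; apply: leq_trans sp _; rewrite addSn -addnS.
- by rewrite rootE -eval2_rv; have := H1x hx (leq0n _); rewrite mulr0 addr0 => ->.
- by rewrite -rv_dy rootE -eval2_rv H3e //; left.
- by rewrite rootE -eval2_rv; have := H1x hx (leqnn _); rewrite grid_end // => ->.
- by rewrite -rv_dy rootE -eval2_rv H3e //; right.
- by move=> i /andP [_ iN]; rewrite rootE -eval2_rv H1x // ltnW.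
Qed.

Lemma S2a ye : ye = b \/ ye = b + h -> restr_h (dy p) ye = 0.
Proof.
move=> hy; apply: (@grid_L1 _ _ a h N) => //.
- by case: hy => ->.
- by rewrite rootE -eval2_rh H3e //; left.
- by rewrite -rh_dx rootE -eval2_rh H4 //; left.
- by rewrite rootE -eval2_rh H3e //; right.
- by rewrite -rh_dx rootE -eval2_rh H4 //; right.
- by move=> i /andP [_ iN]; rewrite rootE -eval2_rh H3 // ltnW.
Qed.

Lemma S2b xe : xe = a \/ xe = a + h -> restr_v (dx p) xe = 0.
Proof.
move=> hx; apply: (@grid_L1 _ _ b h N) => //.
- by case: hx => ->.
- by rewrite rootE -eval2_rv H2e //; left.
- by rewrite -rv_dy rootE -eval2_rv -dxdy H4 //; left.
- by rewrite rootE -eval2_rv H2e //; right.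
- by rewrite -rv_dy rootE -eval2_rv -dxdy H4 //; right.
- by move=> i /andP [_ iN]; rewrite rootE -eval2_rv H2 // ltnW.
Qed.

Lemma Sint i : (0 < i < N.+1)%N -> restr_v p (a + d * i%:R) = 0.
Proof.
move=> /andP [_ iN]; apply: (@grid_L1 _ _ b h N.+1) => //.
- by apply: leq_trans (size_mapP _ _) _; apply: leq_trans sp _; rewrite addSn -addnS.
- by rewrite rootE -eval2_rv (H1y (or_introl erefl)) // ltnW.
- by rewrite -rv_dy rootE -eval2_rv eval2_rh S2a ?horner0 //; left.
- by rewrite rootE -eval2_rv (H1y (or_intror erefl)) // ltnW.
- by rewrite -rv_dy rootE -eval2_rv eval2_rh S2a ?horner0 //; right.
- by move=> j /andP [_ jN]; rewrite rootE -eval2_rv -[b + _]/(b + d * j%:R) H1 // ltnW.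
Qed.

Lemma core : p = 0.
Proof.
apply/polyP => j; rewrite coef0.
apply: (@grid_L1 _ _ a h N.+1) => //.
- by case: Q => _ /(_ j) /leq_trans; apply; rewrite addSn -addnS.
- by rewrite rootE -coef_rv S1b ?coef0 //; left.
- by rewrite rootE -coef_dx -coef_rv S2b ?coef0 //; left.
- by rewrite rootE -coef_rv S1b ?coef0 //; right.
- by rewrite rootE -coef_dx -coef_rv S2b ?coef0 //; right.
- by move=> i iN; rewrite rootE -coef_rv -[a + _]/(a + d * i%:R) Sint ?coef0.
Qed.
End Core.

Section Lin.
Variable R : comNzRingType.
Implicit Types p q : poly2 R.

Lemma dx_lin s p q : dx (s%:P%:P * p + q) = s%:P%:P * dx p + dx q.
Proof.
apply/polyP => j; rewrite coef_dx !coefD !coefCM !coef_dx.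
by rewrite derivD derivM derivC mul0r add0r.
Qed.

Lemma dy_lin s p q : dy (s%:P%:P * p + q) = s%:P%:P * dy p + dy q.
Proof. by rewrite /dy derivD derivM derivC mul0r add0r. Qed.

Lemma eval2_lin s p q x y : eval2 (s%:P%:P * p + q) x y = s * eval2 p x y + eval2 q x y.
Proof. by rewrite /eval2 !hornerE. Qed.

Lemma rh_lin s p q c m :
  (restr_h (s%:P%:P * p + q) c)`_m = s * (restr_h p c)`_m + (restr_h q c)`_m.
Proof. by rewrite /restr_h !hornerE coefD coefCM. Qed.

Lemma rv_lin s p q c m :
  (restr_v (s%:P%:P * p + q) c)`_m = s * (restr_v p c)`_m + (restr_v q c)`_m.
Proof. by rewrite !coef_rv coefD coefCM !hornerE. Qed.
End Lin.
Lemma inj_surj (K : fieldType) (U V : vectType K) (f : U -> V) :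
  linear f -> dim U = dim V -> (forall u, f u = 0 -> u = 0) ->
  forall w, exists u, f u = w.
Proof.
move=> lin dUV inj w.
pose fM := GRing.isLinear.Build _ _ _ _ f lin.
pose fL : {linear U -> V} := HB.pack f fM.
pose g := linfun fL.
have gE : forall u, g u = f u by move=> u; rewrite /g lfunE.
have k0 : lker g == 0%VS.
  apply/lker0P => u v e; apply/eqP; rewrite -subr_eq0; apply/eqP; apply: inj.
  by rewrite -gE linearB /= e subrr.
have dimI : \dim (limg g) = \dim {:V}.
  rewrite limg_dim_eq; last by rewrite (eqP k0) capv0.
  by rewrite !dimvf.
have : limg g == fullv.
  by rewrite -(dimv_leqif_eq (subvf (limg g))) dimI.
move/eqP => e.
have : w \in limg g by rewrite e memvf.
by case/memv_imgP => u _ ->; exists u; rewrite gE.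
Qed.

Section Main.
Variable R : realType.
Variables (k : nat) (a b h : R).

Definition PP (c : 'M[R]_(k.+1, k.+1)) : poly2 R :=
  \poly_(j < k.+1) \poly_(i < k.+1) c (inord i) (inord j).

Definition cons4 (v : poly2 R) (l : 'I_4) : R :=
  if val l == 0%N then (restr_h (dy v) b)`_k
  else if val l == 1%N then (restr_h (dy v) (b + h))`_k
  else if val l == 2%N then (restr_v (dx v) a)`_k
  else (restr_v (dx v) (a + h))`_k.

Definition WT := ('M[R]_(k - 1, k - 1) * 'M[R]_(2, k - 2) * 'M[R]_(k - 2, 2)
   * 'M[R]_(2, 2) * 'rV[R]_4)%type.

Definition Phi_of (v : poly2 R) : WT :=
  (\matrix_(i < k - 1, j < k - 1)
     eval2 v (a + h / (k - 2)%:R * i%:R) (b + h / (k - 2)%:R * j%:R),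
   \matrix_(i < 2, j < k - 2)
     eval2 (dx v) (a + h * i%:R) (b + h * (j%:R / (k - 3)%:R)),
   \matrix_(i < k - 2, j < 2)
     eval2 (dy v) (a + h * (i%:R / (k - 3)%:R)) (b + h * j%:R),
   \matrix_(i < 2, j < 2)
     eval2 (dx (dy v)) (a + h * i%:R) (b + h * j%:R),
   \row_(l < 4) cons4 v l).

Definition Phi c := Phi_of (PP c).

Lemma PP_lin s c d : PP (s *: c + d) = s%:P%:P * PP c + PP d.
Proof.
apply/polyP => j; rewrite coefD coefCM !coef_poly.
case: ltnP => jk; last by rewrite mulr0 addr0.
apply/polyP => i; rewrite coefD coefCM !coef_poly.
case: ltnP => ik; last by rewrite mulr0 addr0.
by rewrite !mxE.
Qed.

Lemma Phi_lin : linear Phi.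
Proof.
move=> s c d; rewrite /Phi /Phi_of PP_lin.
congr (_, _, _, _, _); apply/matrixP => i j; rewrite !mxE.
- by rewrite eval2_lin.
- by rewrite dx_lin eval2_lin.
- by rewrite dy_lin eval2_lin.
- by rewrite dy_lin dx_lin eval2_lin.
- by rewrite /cons4; case: ifP => _; [|case: ifP => _; [|case: ifP => _]];
    rewrite ?dy_lin ?dx_lin ?rh_lin ?rv_lin.
Qed.

Lemma dimW : (4 <= k)%N -> dim 'M[R]_(k.+1, k.+1) = dim WT.
Proof.
move=> hk.
have -> : dim WT = ((k - 1) * (k - 1) + 2 * (k - 2) + (k - 2) * 2 + 2 * 2 + 1 * 4)%N by [].
rewrite dim_matrix; nia.
Qed.


Lemma PP_Q c : inQ k (PP c).
Proof.
split; first exact: size_poly.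
move=> j; rewrite -/((PP c)`_j) coef_poly; case: ifP => _; last by rewrite size_poly0.
exact: size_poly.
Qed.

Lemma PP_coef c i j : (i < k.+1)%N -> (j < k.+1)%N -> ((PP c)`_j)`_i = c (inord i) (inord j).
Proof. by move=> ik jk; rewrite coef_poly jk coef_poly ik. Qed.

Definition cof (v : poly2 R) : 'M[R]_(k.+1, k.+1) := \matrix_(i, j) (v`_j)`_i.

Lemma PP_cof v : inQ k v -> PP (cof v) = v.
Proof.
case=> sv sc; apply/polyP => j; rewrite coef_poly; case: ltnP => jk; last first.
  by rewrite nth_default // (leq_trans sv jk).
apply/polyP => i; rewrite coef_poly; case: ltnP => ik; last first.
  by rewrite nth_default // (leq_trans (sc j) ik).
by rewrite mxE !inordK.
Qed.

Lemma PP_inj c : PP c = 0 -> c = 0.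
Proof.
move=> e; apply/matrixP => i j; rewrite mxE.
by have := PP_coef c (ltn_ord i) (ltn_ord j); rewrite e !coef0 !inord_val => <-.
Qed.

Lemma rh_dy_big (v : poly2 R) (c : R) m : inQ k v -> (k < m)%N -> (restr_h (dy v) c)`_m = 0.
Proof.
case=> sv sc km; rewrite (coef_rh _ _ (leqnn _)); apply: big1 => j _.
by rewrite coef_dy coefMn nth_default ?mul0rn ?mulr0 // (leq_trans (sc _) km).
Qed.

Lemma rv_dx_big (v : poly2 R) (c : R) m : inQ k v -> (k < m)%N -> (restr_v (dx v) c)`_m = 0.
Proof.
case=> sv sc km; rewrite coef_rv coef_dx nth_default ?deriv0 ?horner0 //.
exact: leq_trans sv km.
Qed.

Lemma size_k (q : {poly R}) : (forall m, (k < m)%N -> q`_m = 0) ->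
  (size q <= k)%N <-> q`_k = 0.
Proof.
move=> hm; split => [sq|qk]; first by rewrite nth_default.
apply/leq_sizeP => m; rewrite leq_eqVlt => /orP [/eqP <- //|]; exact: hm.
Qed.


Lemma cons_size (v : poly2 R) : inQ k v ->
  (forall l, cons4 v l = 0) <->
  [/\ (size (restr_h (dy v) b) <= k)%N, (size (restr_h (dy v) (b + h)) <= k)%N,
      (size (restr_v (dx v) a) <= k)%N & (size (restr_v (dx v) (a + h)) <= k)%N].
Proof.
move=> vQ.
have [s1 s1'] := size_k (fun m => @rh_dy_big v b m vQ).
have [s2 s2'] := size_k (fun m => @rh_dy_big v (b + h) m vQ).
have [s3 s3'] := size_k (fun m => @rv_dx_big v a m vQ).
have [s4 s4'] := size_k (fun m => @rv_dx_big v (a + h) m vQ).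
split.
  move=> hl; split.
  - exact/s1'/(hl (Ordinal (isT : (0 < 4)%N))).
  - exact/s2'/(hl (Ordinal (isT : (1 < 4)%N))).
  - exact/s3'/(hl (Ordinal (isT : (2 < 4)%N))).
  - exact/s4'/(hl (Ordinal (isT : (3 < 4)%N))).
case=> e1 e2 e3 e4 [[|[|[|[|l]]]] hl] //; rewrite /cons4 /=; auto.
Qed.

Lemma Phi_inj (hk : (4 <= k)%N) (hh : 0 < h) c : Phi c = 0 -> c = 0.
Proof.
move=> E; apply: PP_inj.
have E' : Phi_of (PP c) = 0 := E.
set v := PP c in E' *.
have E1 : forall i j, (Phi_of v).1.1.1.1 i j = 0 by move=> i j; rewrite E' /= mxE.
have E2 : forall i j, (Phi_of v).1.1.1.2 i j = 0 by move=> i j; rewrite E' /= mxE.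
have E3 : forall i j, (Phi_of v).1.1.2 i j = 0 by move=> i j; rewrite E' /= mxE.
have E4 : forall i j, (Phi_of v).1.2 i j = 0 by move=> i j; rewrite E' /= mxE.
have E5 : forall l, cons4 v l = 0.
  by move=> l; have := congr1 (fun w : WT => w.2 0 l) E'; rewrite /= !mxE.
set N := (k - 3)%N.
have k2 : (k - 2)%N = N.+1 by rewrite /N; lia.
have kE : k = (N + 3)%N by rewrite /N; lia.
have vQ : inQ k v := PP_Q c.
have [C1 C2 C3 C4] := (cons_size vQ).1 E5.
apply: (@core R N a b h v).
- by rewrite /N; lia.
- exact: hh.
- by rewrite -kE.
- by rewrite -kE.
- by rewrite -kE.
- by rewrite -kE.
- by rewrite -kE.
- move=> i j iN jN.
  have iN' : (i < k - 1)%N by rewrite /N in iN *; lia.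
  have jN' : (j < k - 1)%N by rewrite /N in jN *; lia.
  by have := E1 (Ordinal iN') (Ordinal jN'); rewrite mxE /= k2.
- move=> xe hx j jN.
  have jN' : (j < k - 2)%N by rewrite /N in jN *; lia.
  case: hx => ->.
    have := E2 (Ordinal (isT : (0 < 2)%N)) (Ordinal jN'); rewrite mxE /=.
    by rewrite mulr0 addr0 -/N mulrA mulrAC.
  have := E2 (Ordinal (isT : (1 < 2)%N)) (Ordinal jN'); rewrite mxE /=.
  by rewrite mulr1 -/N mulrA mulrAC.
- move=> ye hy i iN.
  have iN' : (i < k - 2)%N by rewrite /N in iN *; lia.
  case: hy => ->.
    have := E3 (Ordinal iN') (Ordinal (isT : (0 < 2)%N)); rewrite mxE /=.
    by rewrite mulr0 addr0 -/N mulrA mulrAC.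
  have := E3 (Ordinal iN') (Ordinal (isT : (1 < 2)%N)); rewrite mxE /=.
  by rewrite mulr1 -/N mulrA mulrAC.
- move=> xe ye hx hy.
  have o0 : (0 < 2)%N by []. have o1 : (1 < 2)%N by [].
  case: hx => ->; case: hy => ->.
  + by have := E4 (Ordinal o0) (Ordinal o0); rewrite mxE /= mulr0 !addr0.
  + by have := E4 (Ordinal o0) (Ordinal o1); rewrite mxE /= mulr0 mulr1 !addr0.
  + by have := E4 (Ordinal o1) (Ordinal o0); rewrite mxE /= mulr0 mulr1 !addr0.
  + by have := E4 (Ordinal o1) (Ordinal o1); rewrite mxE /= mulr1.
Qed.

End Main.

Unset Implicit Arguments.
Theorem lemma2p1 (R : realType) (k : nat) (a b h : R)
  (hk : (4 <= k)%N) (hh : 0 < h)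
  (f1 : 'I_(k - 1) -> 'I_(k - 1) -> R)
  (f2 : 'I_2 -> 'I_(k - 2) -> R)
  (f3 : 'I_(k - 2) -> 'I_2 -> R)
  (f4 : 'I_2 -> 'I_2 -> R) :
  exists! v : poly2 R,
    [/\ inVT k a b h v,
        (forall (i j : 'I_(k - 1)),
           eval2 v (a + h / (k - 2)%:R * i%:R) (b + h / (k - 2)%:R * j%:R)
           = f1 i j),
        (forall (i : 'I_2) (j : 'I_(k - 2)),
           eval2 (dx v) (a + h * i%:R) (b + h * (j%:R / (k - 3)%:R))
           = f2 i j),
        (forall (i : 'I_(k - 2)) (j : 'I_2),
           eval2 (dy v) (a + h * (i%:R / (k - 3)%:R)) (b + h * j%:R)
           = f3 i j) &
        (forall (i j : 'I_2),
           eval2 (dx (dy v)) (a + h * i%:R) (b + h * j%:R) = f4 i j)].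
Proof.
pose tgt : WT R k := (\matrix_(i, j) f1 i j, \matrix_(i, j) f2 i j,
   \matrix_(i, j) f3 i j, \matrix_(i, j) f4 i j, 0).
have lin := @Phi_lin R k a b h.
have [c Ec] := inj_surj lin (@dimW R k hk) (@Phi_inj R k a b h hk hh) tgt.
exists (PP c); split.
  split.
  - have hl : forall l, cons4 k a b h (PP c) l = 0.
      by move=> l; have := congr1 (fun w : WT R k => w.2 0 l) Ec; rewrite /= !mxE.
    have [t1 t2 t3 t4] := (@cons_size R k a b h (PP c) (PP_Q c)).1 hl.
    by split => //; exact: PP_Q.
  - by move=> i j; have := congr1 (fun w : WT R k => w.1.1.1.1 i j) Ec; rewrite /= !mxE.
  - by move=> i j; have := congr1 (fun w : WT R k => w.1.1.1.2 i j) Ec; rewrite /= !mxE.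
  - by move=> i j; have := congr1 (fun w : WT R k => w.1.1.2 i j) Ec; rewrite /= !mxE.
  - by move=> i j; have := congr1 (fun w : WT R k => w.1.2 i j) Ec; rewrite /= !mxE.
move=> v' [[vQ s1 s2 s3 s4] e1 e2 e3 e4].
have Pv : PP (cof k v') = v' := PP_cof vQ.
have Ec' : Phi a b h (cof k v') = tgt.
  rewrite /Phi Pv /Phi_of /tgt; congr (_, _, _, _, _); apply/matrixP => i j; rewrite !mxE //.
  by have := (@cons_size R k a b h v' vQ).2 (And4 s1 s2 s3 s4); apply.
have : Phi a b h (cof k v' - c) = 0.
  by rewrite -[cof k v' - c]addrC -scaleN1r lin Ec Ec' scaleN1r addNr.
move/(Phi_inj hk hh)/eqP; rewrite subr_eq0 => /eqP <-.
exact: Pv.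
Qed.
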